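(* Let $(H,f)$ be a vertex-weighted graph with $H$ connected and $f$ not identically zero, and let $G=L(H,f)$. If $k(G)=1$, then at least one of the following holds: (i) $f(v)=1$ for some vertex $v$ of $H$; (ii) there exists a vertex $v$ of $H$ with $f(v)=0$ such that $K_H(v)$ contains a simplicial vertex of $G$.
   Context: All graphs are finite and simple. For a digraph $D$, its competition graph $C(D)$ has vertex set $V(D)$, two distinct vertices $u,v$ adjacent iff some vertex $x$ satisfies $(u,x),(v,x)\in A(D)$. The competition number $k(G)$ is the smallest nonnegative integer $k$ such that $G$ together with $k$ new isolated vertices is the competition graph of an acyclic digraph. For a positive integer $m$, $CP(m)$ is the complete multipartite graph with $m$ parts each of size two. A vertex-weighted graph $(H,f)$ is a graph $H$ with $f:V(H)\to\mathbb{Z}_{\ge0}$. The generalized line graph $L(H,f)$ is obtained from the disjoint union of the line graph $L(H)$ (vertex set $E(H)$, two distinct edges adjacent iff they share an endpoint) and the graphs $Q_v:=CP(f(v))$ for each $v$ with $f(v)>0$, by adding all edges between every vertex of $Q_v$ and every $e\in E(H)$ incident to $v$. $K_H(v)$ is the set of edges of $H$ incident to $v$. A vertex is simplicial if its neighborhood is a clique. *)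

(* Defs.v *)
From HB Require Import structures.
From mathcomp Require Import all_boot.
Set Implicit Arguments. Unset Strict Implicit. Unset Printing Implicit Defensive.

Definition acyclic (U : finType) (D : rel U) : Prop :=
  forall x y : U, D x y -> ~~ connect D y x.

Definition comp_graph (U : finType) (D : rel U) : rel U :=
  fun u v => (u != v) && [exists x, D u x && D v x].

Definition add_isolated (V : finType) (adj : rel V) (k : nat) : rel (V + 'I_k) :=
  fun a b => match a, b with inl u, inl v => adj u v | _, _ => false end.

Arguments add_isolated {V} adj k.

Definition comp_feasible (V : finType) (adj : rel V) (k : nat) : Prop :=
  exists D : rel (V + 'I_k), acyclic D /\ comp_graph D =2 add_isolated adj k.

Definition competition_number (V : finType) (adj : rel V) (k : nat) : Prop :=
  comp_feasible adj k /\ forall j, j < k -> ~ comp_feasible adj j.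

Definition simplicial (V : finType) (adj : rel V) (x : V) : Prop :=
  forall y z, adj x y -> adj x z -> y != z -> adj y z.

Definition is_edge (T : finType) (h : rel T) (e : {set T}) : bool :=
  [exists x, exists y, h x y && (e == [set x; y])].

Definition edge_type (T : finType) (h : rel T) := {e : {set T} | is_edge h e}.

(* Vertices of Q_v = CP(f v): pairs (i, b), i < f v (the part), b : bool. *)
Definition cp_type (T : finType) (f : T -> nat) := {v : T & ('I_(f v) * bool)%type}.

Definition gl_vertex (T : finType) (h : rel T) (f : T -> nat) :=
  (edge_type h + cp_type f)%type.

Definition gl_adj (T : finType) (h : rel T) (f : T -> nat) : rel (gl_vertex h f) :=
  fun a b =>
    match a, b with
    | inl e1, inl e2 => (e1 != e2) && [exists x, (x \in val e1) && (x \in val e2)]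
    | inr q1, inr q2 => (tag q1 == tag q2) &&
                          (nat_of_ord (tagged q1).1 != nat_of_ord (tagged q2).1)
    | inl e, inr q => tag q \in val e
    | inr q, inl e => tag q \in val e
    end.
Arguments edge_type {T} h.
Arguments cp_type {T} f.
Arguments gl_vertex {T} h f.
Arguments gl_adj {T} h f a b.

(* Main.v *)
Require Import Defs.
From mathcomp Require Import all_boot.

Lemma simp_exists (V : finType) (adj : rel V) (x0 : V) :
  comp_feasible adj 1 -> exists x, simplicial adj x.
Proof.
case=> D [acD Heq].
pose F (y : V) := #|[set w | connect D (inl y) w]|.
case: (@arg_minnP V x0 predT F isT) => x _ Hmin.
have nox : forall y, ~~ D (inl x) (inl y).
  move=> y; apply/negP => Dxy.
  have: [set w | connect D (inl y) w] \proper [set w | connect D (inl x) w].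
    apply/properP; split.
      apply/subsetP => w; rewrite !inE => Cyw.
      exact: connect_trans (connect1 Dxy) Cyw.
    exists (inl x); first by rewrite inE connect0.
    by rewrite inE; apply: acD.
  move/proper_card; rewrite -/(F y) -/(F x).
  by move: (Hmin y isT); rewrite leqNgt => /negP.
have outz : forall y, adj x y -> D (inl y) (inr ord0).
  move=> y axy.
  have := Heq (inl x) (inl y); rewrite /= axy /comp_graph.
  case/andP => _ /existsP [p /andP [Dxp Dyp]].
  case: p Dxp Dyp => [p|i] Dxp Dyp; first by have := nox p; rewrite Dxp.
  by rewrite (ord1 i) in Dyp.
exists x => y z axy axz neq.
have := Heq (inl y) (inl z); rewrite /= => <-.
rewrite /comp_graph; apply/andP; split; first by [].
by apply/existsP; exists (inr ord0); rewrite !outz.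
Qed.

Theorem theorem2p8 (T : finType) (h : rel T) (f : T -> nat)
  (h_sym : symmetric h) (h_irr : irreflexive h)
  (h_conn : forall x y : T, connect h x y)
  (f_nz : exists v : T, f v != 0)
  (kG1 : competition_number (gl_adj h f) 1) :
  (exists v : T, f v = 1) \/
  (exists v : T, f v = 0 /\
     exists e : edge_type h, v \in val e /\ simplicial (gl_adj h f) (inl e)).
Proof.
case: f_nz => v0 fv0.
have p0 : 0 < f v0 by rewrite lt0n.
have x0 : gl_vertex h f := inr (existT _ v0 (Ordinal p0, true)).
case: (simp_exists _ _ x0 kG1.1) => x simx.
pose g (w : gl_vertex h f) : bool :=
  match w with inr q => (tagged q).2 | _ => false end.
have neqTF : forall a (j : 'I_(f a)),
  (inr (existT _ a (j, true)) : gl_vertex h f) != inr (existT _ a (j, false)).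
  move=> a j; apply/negP => /eqP H.
  by have := congr1 g H.
case: x simx => [e | [v [i b]]] simx.
- case/existsP: (valP e) => a /existsP [c /andP [_ /eqP Ee]].
  have ae : a \in val e by rewrite Ee set21.
  case fa: (f a == 0); first by right; exists a; split; [exact/eqP|exists e].
  have pa : 0 < f a by rewrite lt0n fa.
  have := simx _ _ _ _ (neqTF a (Ordinal pa)).
  by rewrite /= eqxx /= ae => /(_ isT isT).
- case fv1: (f v == 1); first by left; exists v; exact/eqP.
  have j0 : 0 < f v by apply: leq_ltn_trans (ltn_ord i).
  have j1 : 1 < f v by rewrite ltn_neqAle eq_sym fv1 j0.
  have [j Hj] : exists j : 'I_(f v), nat_of_ord j != nat_of_ord i.
    case: (nat_of_ord i =P 0) => Hi.
      by exists (Ordinal j1); rewrite /= Hi.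
    by exists (Ordinal j0); rewrite /= eq_sym; apply/eqP.
  have := simx _ _ _ _ (neqTF v j).
  by rewrite /= eqxx /= eq_sym Hj eqxx => /(_ isT isT).
Qed.
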